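(* Let $\mathcal F_{n,s,d}$ denote the class of $s$-sparse polynomials $f:\{0,1\}^n\to\mathbb{R}$ of degree at most $d$ all of whose non-zero M\''obius coefficients lie in $[s]=\{1,2,\dots,s\}$. Any deterministic algorithm that recovers every $f\in\mathcal F_{n,s,d}$ from evaluation queries (queries $\mathbf x\in\{0,1\}^n$ answered by $f(\mathbf x)$) must use at least $$\Omega\!\left(\frac{sd\log(n/d)}{\log s}\right)$$ queries in the worst case.
   Context: Every $f:\{0,1\}^n\to\mathbb{R}$ has a unique expansion $f(\mathbf x)=\sum_{\mathbf k\in\{0,1\}^n,\ \mathbf k\le\mathbf x}F(\mathbf k)$ (real addition, $\le$ componentwise); the $F(\mathbf k)$ are its M\''obius coefficients. $f$ is $s$-sparse if at most $s$ of its M\''obius coefficients are non-zero, and has degree at most $d$ if every $\mathbf k$ with $F(\mathbf k)\ne0$ has Hamming weight at most $d$. *)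

(* Defs.v *)
From HB Require Import structures.
From mathcomp Require Import all_boot all_order all_algebra.
From mathcomp Require Import all_classical all_reals exp.
Set Implicit Arguments. Unset Strict Implicit. Unset Printing Implicit Defensive.
Import Order.TTheory GRing.Theory Num.Theory.
Local Open Scope ring_scope.

Definition cube (n : nat) := {ffun 'I_n -> bool}.

Definition cube_le n (k x : cube n) : bool := [forall i, k i ==> x i].

Definition weight n (k : cube n) : nat := #|[set i | k i]|.

Definition moebius_coeffs (R : realType) n (f : cube n -> R) (F : cube n -> R) :=
  forall x : cube n, f x = \sum_(k : cube n | cube_le k x) F k.

Definition in_class (R : realType) n (s d : nat) (f : cube n -> R) : Prop :=
  exists F : cube n -> R,
    [/\ moebius_coeffs f F,
        (#|[set k : cube n | (F k != 0)%R]| <= s)%N,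
        (forall k, (F k != 0)%R -> (weight k <= d)%N) &
        (forall k, (F k != 0)%R -> exists j : nat, (1 <= j <= s)%N /\ (F k = j%:R)%R)].

(* A deterministic adaptive query algorithm: the next query is chosen
   as a function of the answers obtained so far; after the queries the
   output is a function of all answers. *)
Fixpoint answers (R : realType) n (Q : seq R -> cube n) (f : cube n -> R)
    (q : nat) : seq R :=
  match q with
  | O => [::]
  | q'.+1 => let a := answers Q f q' in rcons a (f (Q a))
  end.

Definition recovers (R : realType) n (s d : nat) (Q : seq R -> cube n)
    (out : seq R -> cube n -> R) (q : nat) : Prop :=
  forall f : cube n -> R, in_class s d f ->
    forall x : cube n, out (answers Q f q) x = f x.

Definition num_monomials n (d : nat) : nat := #|[set k : cube n | (weight k <= d)%N]|.

(* Main.v *)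
Require Import Defs.
From HB Require Import structures.
From mathcomp Require Import all_boot all_order all_algebra.
From mathcomp Require Import all_classical all_reals exp.
From mathcomp Require Import zify ring lra.
Import Order.TTheory GRing.Theory Num.Theory.
Local Open Scope ring_scope.
Local Notation inE := finset.inE.
Local Notation in_set := finset.in_set.
Local Notation subsetP := fintype.subsetP.

Lemma binom_lb (n d : nat) : (d <= n)%N -> (n ^ d <= 'C(n, d) * d ^ d)%N.
Proof.
move=> dn.
have fpos : (0 < d`!)%N by apply: fact_gt0.
rewrite -(leq_pmul2r fpos) mulnAC bin_ffact -ffactnn !ffact_prod.
have e1 : (n ^ d = \prod_(i < d) n)%N by rewrite prod_nat_const card_ord.
have e2 : (d ^ d = \prod_(i < d) d)%N by rewrite prod_nat_const card_ord.
rewrite e1 e2 -!big_split /=.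
apply: leq_prod => i _; have := ltn_ord i; nia.
Qed.

Lemma binom_le_num (n d : nat) : ('C(n, d) <= num_monomials n d)%N.
Proof.
rewrite /num_monomials.
pose g := fun A : {set 'I_n} => [ffun i => i \in A] : cube n.
have ginj : injective g.
  move=> A B /ffunP E; apply/setP => i; have := E i; by rewrite !ffunE.
rewrite -[n in 'C(n, _)]card_ord -card_draws -(card_imset _ ginj).
apply: subset_leq_card; apply/fintype.subsetP => k /imsetP [A HA ->]; move: HA. rewrite (@finset.in_set _ (fun A0 : {set 'I_n} => #|A0| == d)). move=> /eqP HA.
rewrite ?in_set /weight -HA; apply: eq_leq; apply: eq_card => i; by rewrite !in_set ffunE.
Qed.

Lemma weight_lt n (j k : cube n) : cube_le j k -> j != k -> (weight j < weight k)%N.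
Proof.
move=> /forallP jk neq; rewrite /weight.
have sub : [set i | j i] \subset [set i | k i].
  apply/subsetP => i; rewrite !inE; exact: (implyP (jk i)).
rewrite ltnNge; apply/negP => le.
have : [set i | j i] == [set i | k i] by rewrite eqEcard sub le.
move/eqP/setP => E; move/negP: neq; apply; apply/eqP/ffunP => i.
by have := E i; rewrite !inE.
Qed.

Lemma moebius_unique (R : realType) n (F G : cube n -> R) :
  (forall x, \sum_(k | cube_le k x) F k = \sum_(k | cube_le k x) G k) ->
  forall k, F k = G k.
Proof.
move=> H.
suff: forall w k, (weight k < w)%N -> F k = G k.
  by move=> S k; apply: (S (weight k).+1).
elim=> [//|w IH] k wk.
have kk : cube_le k k by apply/forallP => i; apply/implyP.
have := H k; rewrite (bigD1 (P := fun j => cube_le j k) k kk) (bigD1 (P := fun j => cube_le j k) k kk) /=.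
rewrite (eq_bigr (fun j => G j)); first by move/addIr.
move=> j /andP [jk jnk]; apply: IH.
have := @weight_lt n j k jk jnk; rewrite ltnS in wk; move=> h; exact: leq_trans h wk.
Qed.

Lemma size_answers (R : realType) n (Q : seq R -> cube n) f q :
  size (answers Q f q) = q.
Proof. by elim: q => //= q IH; rewrite size_rcons IH. Qed.

Lemma answers_range (R : realType) n (Q : seq R -> cube n) f q r :
  r \in answers Q f q -> exists x, r = f x.
Proof.
elim: q => //= q IH; rewrite mem_rcons in_cons => /orP [/eqP -> | /IH //].
by exists (Q (answers Q f q)).
Qed.

Section Param.
Variables (R : realType) (n s a d : nat) (e : 'I_s * 'I_a -> cube n).
Hypothesis einj : injective e.
Hypothesis ew : forall x, (weight (e x) <= d)%N.

Definition Fn (p : {ffun 'I_s -> 'I_a * 'I_s}) (k : cube n) : nat :=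
  (\sum_(i < s) if k == e (i, (p i).1) then ((p i).2).+1 else 0)%N.

Definition fp (p : {ffun 'I_s -> 'I_a * 'I_s}) (x : cube n) : R :=
  \sum_(k | cube_le k x) (Fn p k)%:R.

Lemma Fn_at p i : Fn p (e (i, (p i).1)) = ((p i).2).+1.
Proof.
rewrite /Fn (bigD1 i) //= eqxx big1 ?addn0 // => j ji.
case: eqP => // /einj [] /eqP; by rewrite eq_sym (negbTE ji).
Qed.

Lemma Fn_supp p k : Fn p k != 0%N -> exists i, k = e (i, (p i).1).
Proof.
case: (boolP [exists i, k == e (i, (p i).1)]) => [/existsP [i /eqP ->] _| ].
  by exists i.
rewrite negb_exists => /forallP H; rewrite /Fn big1 ?eqxx // => i _.
by rewrite (negbTE (H i)).
Qed.

Lemma Fn_sum_le p : (\sum_k Fn p k <= s * s)%N.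
Proof.
rewrite /Fn exchange_big /=.
have -> : (\sum_(i < s) \sum_k (if k == e (i, (p i).1) then (p i).2.+1 else 0)
   = \sum_(i < s) (p i).2.+1)%N.
  apply: eq_bigr => i _; rewrite (bigD1 (e (i, (p i).1))) //= eqxx big1 ?addn0 //.
  by move=> k /negbTE ->.
apply: (@leq_trans (\sum_(i < s) s)); first by apply: leq_sum => i _; exact: ltn_ord.
by rewrite sum_nat_const card_ord.
Qed.

Lemma fp_nat p x : exists m, (m <= s * s)%N /\ fp p x = m%:R.
Proof.
exists (\sum_(k | cube_le k x) Fn p k)%N; split; last by rewrite /fp natr_sum.
apply: leq_trans (Fn_sum_le p).
rewrite [X in (_ <= X)%N](bigID (fun k => cube_le k x)) /=; exact: leq_addr.
Qed.

Lemma fp_in_class p : in_class s d (fp p).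
Proof.
exists (fun k => (Fn p k)%:R); split.
- by [].
- apply: (@leq_trans #|[set e (i, (p i).1) | i : 'I_s]|); last first.
    by apply: leq_trans (leq_imset_card _ _) _; rewrite card_ord.
  apply: subset_leq_card; apply/subsetP => k; rewrite inE pnatr_eq0 => /Fn_supp [i ->].
  by apply/imsetP; exists i.
- by move=> k; rewrite pnatr_eq0 => /Fn_supp [i ->].
- move=> k; rewrite pnatr_eq0 => /Fn_supp [i ->]; exists ((p i).2).+1.
  by rewrite Fn_at ltn_ord.
Qed.

Lemma Fn_inj p p' : (forall k, Fn p k = Fn p' k) -> p = p'.
Proof.
move=> H; apply/ffunP => i.
have h1 := Fn_at p i.
have : Fn p' (e (i, (p i).1)) != 0%N by rewrite -H h1.
move=> /Fn_supp [j /einj [ij e1]].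
rewrite -ij in e1.
have := Fn_at p' i; rewrite -e1 -H h1 => -[e2].
rewrite [p i]surjective_pairing [p' i]surjective_pairing e1; congr pair; exact: val_inj.
Qed.

End Param.
Lemma count_bound (R : realType) n s a d (e : 'I_s * 'I_a -> cube n)
  (einj : injective e) (ew : forall x, (weight (e x) <= d)%N)
  q (Q : seq R -> cube n) (out : seq R -> cube n -> R) :
  recovers s d Q out q -> ((a * s) ^ s <= (s * s).+1 ^ q)%N.
Proof.
move=> Hrec.
pose ans p := answers Q (fp R n s a e p) q.
pose enc p := [ffun t : 'I_q => (inord (Num.truncn (nth 0 (ans p) t)) : 'I_(s * s).+1)].
have encinj : injective enc.
  move=> p p' E.
  have A : ans p = ans p'.
    apply: (@eq_from_nth _ 0); rewrite !size_answers // => t tq.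
    have val_of : forall p'', exists m, (m <= s * s)%N /\ nth 0 (ans p'') t = m%:R.
      move=> p''.
      have tq' : (t < size (ans p''))%N by rewrite size_answers.
      have [x ->] := @answers_range R n Q _ q _ (mem_nth 0 tq').
      exact: fp_nat.
    move/ffunP: E => /(_ (Ordinal tq)); rewrite !ffunE /=.
    move: (val_of p) (val_of p') => [m [hm ->]] [m' [hm' ->]].
    rewrite !natrK => /(congr1 val); by rewrite /= !inordK ?ltnS // => ->.
  have F : forall x, fp R n s a e p x = fp R n s a e p' x.
    move=> x; rewrite -(Hrec _ (@fp_in_class R n s a d e einj ew p) x).
    by rewrite -/(ans p) A (Hrec _ (@fp_in_class R n s a d e einj ew p') x).
  apply: (@Fn_inj n s a e einj) => k; apply/eqP; rewrite -(eqr_nat R); apply/eqP.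
  exact: (@moebius_unique R n (fun k => (Fn n s a e p k)%:R) (fun k => (Fn n s a e p' k)%:R) F k).
have := @leq_card _ _ enc encinj.
by rewrite !card_ffun card_prod !card_ord mulnC.
Qed.

Lemma ln_nat_le (R : realType) (x y : nat) : (0 < x)%N -> (x <= y)%N ->
  ln (x%:R : R) <= ln (y%:R).
Proof.
move=> x0 xy; rewrite ler_ln ?ler_nat // posrE ltr0n //; exact: leq_trans xy.
Qed.

Lemma ln_natX (R : realType) (x k : nat) : (0 < x)%N ->
  ln ((x ^ k)%:R : R) = k%:R * ln (x%:R).
Proof. by move=> x0; rewrite natrX lnXn ?ltr0n // mulr_natl. Qed.

Lemma real_final (R : realType) (n s d q A M : nat) :
  (1 <= d <= n)%N -> (2 <= s)%N -> (2 <= A)%N ->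
  (A ^ s <= (s * s).+1 ^ q)%N -> (M <= A ^ 2)%N -> (n ^ d <= M * d ^ d)%N ->
  6^-1 * (s%:R * d%:R * ln (n%:R / d%:R) / ln s%:R) <= (q%:R : R).
Proof.
move=> /andP [d1 dn] s2 A2 h1 hM hC.
have A0 : (0 < A)%N by apply: leq_trans A2.
have s0 : (0 < s)%N by apply: leq_trans s2.
have n0 : (0 < n)%N by apply: leq_trans dn.
have M0 : (0 < M)%N.
  rewrite lt0n; apply/eqP => M00; move: hC; rewrite M00 mul0n leqn0 expn_eq0.
  by move=> /andP [/eqP n00 _]; rewrite n00 in n0.
have lnS : 0 < ln (s%:R : R) by apply: ln_gt0; rewrite ltr1n.
have e1 : s%:R * ln (A%:R : R) <= q%:R * ln ((s * s).+1)%:R.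
  rewrite -!ln_natX //; apply: ln_nat_le => //; by rewrite expn_gt0 A0.
have e2 : ln (((s * s).+1)%:R : R) <= 3%:R * ln (s%:R).
  rewrite -ln_natX //; apply: ln_nat_le => //; nia.
have e3 : ln (M%:R : R) <= 2%:R * ln (A%:R).
  rewrite -ln_natX //; exact: ln_nat_le.
have nd0 : 0 < (n%:R : R) / d%:R by rewrite divr_gt0 // ltr0n.
have e4 : d%:R * ln ((n%:R : R) / d%:R) <= ln (M%:R).
  rewrite mulr_natl -lnXn //; rewrite ler_ln ?posrE ?exprn_gt0 ?ltr0n //.
  rewrite expr_div_n ler_pdivrMr ?exprn_gt0 ?ltr0n // -!natrX -natrM ler_nat //.
have sP : 0 <= (s%:R : R) by rewrite ler0n.
have qP : 0 <= (q%:R : R) by rewrite ler0n.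
have f1 := ler_wpM2l sP e4.
have f2 := ler_wpM2l sP e3.
have f3 := ler_wpM2l qP e2.
have key : s%:R * d%:R * ln ((n%:R : R) / d%:R) <= 6%:R * q%:R * ln (s%:R).
  move: f1 f2 f3 e1; set L := ln _; set lM := ln _; set lA := ln _; set lY := ln _; set lS := ln _.
  rewrite -!mulrA; move=> f1 f2 f3 e1. nra.
move: key; set X := _ * _ * _; move=> key.
have lS0 : ln (s%:R : R) != 0 by rewrite gt_eqF.
have -> : 6^-1 * (X / ln (s%:R : R)) = X / (6%:R * ln (s%:R)).
  by field; exact: lS0.
rewrite ler_pdivrMr; last by apply: mulr_gt0 => //; rewrite ltr0n.
lra.
Qed.

Theorem theorem3 (R : realType) :
  exists c : R, 0 < c /\
    forall (n s d : nat), (1 <= d <= n)%N -> (2 <= s)%N ->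
      (s <= num_monomials n d)%N ->
      forall (q : nat) (Q : seq R -> cube n) (out : seq R -> cube n -> R),
        recovers s d Q out q ->
        c * (s%:R * d%:R * ln (n%:R / d%:R) / ln s%:R) <= q%:R.
Proof.
exists 6^-1; split; first by rewrite invr_gt0 ltr0n.
move=> n s d hd s2 sM q Q out Hrec.
set M := num_monomials n d in sM.
set a := (M %/ s)%N.
have s0 : (0 < s)%N by apply: leq_trans s2.
have a1 : (0 < a)%N by rewrite divn_gt0.
have H : (#|{: 'I_s * 'I_a}| <= M)%N.
  by rewrite card_prod !card_ord mulnC leq_divM.
pose S := [set k : cube n | (weight k <= d)%N].
pose e := fun x : 'I_s * 'I_a => @enum_val _ (mem S) (widen_ord H (enum_rank x)).
have einj : injective e.
  move=> x y /enum_val_inj /(congr1 val) /= /val_inj; exact: enum_rank_inj.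
have ew : forall x, (weight (e x) <= d)%N.
  move=> x; have := enum_valP (widen_ord H (enum_rank x)).
  by rewrite finset.inE.
have hc := @count_bound R n s a d e einj ew q Q out Hrec.
have hM : (M <= (a * s) ^ 2)%N.
  have := divn_eq M s; have := ltn_pmod M s0; rewrite -/a; nia.
have hC : (n ^ d <= M * d ^ d)%N.
  case/andP: hd => _ dn.
  apply: leq_trans (@binom_lb n d dn) _; by rewrite leq_mul2r (binom_le_num n d) orbT.
apply: (@real_final R n s d q (a * s) M hd s2 _ hc hM hC); nia.
Qed.
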